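(* Let $(\mathcal{S}_1,\mathcal{S}_2)$ be an $S$-pair with $|S| = n \ge 3$. Then there is at most one element $s \in S$ with the following property: there exist a subset $D \subseteq S - s$ with $|D| = n-2$ and positive integers $i,j$ with $i+j = n-1$ such that $X \cup \{s\} \in \mathcal{S}_1$ for every $i$-element subset $X$ of $D$, and every $j$-element subset of $D$ lies in $\mathcal{S}_2$.
   Context: Let $S$ be a finite nonempty set and $\mathcal{S}_1, \mathcal{S}_2 \subseteq 2^S$. The pair $(\mathcal{S}_1,\mathcal{S}_2)$ is an $S$-pair if: (S1) for $i=1,2$, if $A,B \in \mathcal{S}_i$ with $B \subset A$ and $|A| = |B|+1$, then every $|B|$-element subset of $A$ lies in $\mathcal{S}_i$; (S2) for $i=1,2$, if $A,B \in \mathcal{S}_i$ with $|A|=|B|$ and $|A\cap B| = |A|-1$, then $A\cup B \in \mathcal{S}_i$; (S3) for $i=1,2$, not every singleton $\{s\}$, $s\in S$, lies in $\mathcal{S}_i$, and $S \notin \mathcal{S}_i$; (S4) for $k = 1,\dots,|S|-1$ and $x\in S$, if every $k$-element subset of $S - x$ lies in $\mathcal{S}_1$, then not every $(|S|-k)$-element subset of $S-x$ lies in $\mathcal{S}_2$. *)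

(* Defs.v *)
From mathcomp Require Import all_boot.
Set Implicit Arguments. Unset Strict Implicit. Unset Printing Implicit Defensive.

Definition axS1 (S : finType) (F : {set {set S}}) : Prop :=
  forall A B : {set S}, A \in F -> B \in F -> B \proper A -> #|A| = #|B|.+1 ->
    forall C : {set S}, C \subset A -> #|C| = #|B| -> C \in F.

Definition axS2 (S : finType) (F : {set {set S}}) : Prop :=
  forall A B : {set S}, A \in F -> B \in F -> #|A| = #|B| ->
    #|A :&: B| = #|A| - 1 -> A :|: B \in F.

Definition axS3 (S : finType) (F : {set {set S}}) : Prop :=
  (exists s : S, [set s] \notin F) /\ [set: S] \notin F.

Definition axS4 (S : finType) (F1 F2 : {set {set S}}) : Prop :=
  forall (k : nat) (x : S), 1 <= k <= #|S| - 1 ->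
    (forall X : {set S}, X \subset [set~ x] -> #|X| = k -> X \in F1) ->
    ~ (forall X : {set S}, X \subset [set~ x] -> #|X| = #|S| - k -> X \in F2).

Definition S_pair (S : finType) (F1 F2 : {set {set S}}) : Prop :=
  axS1 F1 /\ axS1 F2 /\ axS2 F1 /\ axS2 F2 /\ axS3 F1 /\ axS3 F2 /\ axS4 F1 F2.

Definition special_elt (S : finType) (F1 F2 : {set {set S}}) (s : S) : Prop :=
  exists (D : {set S}) (i j : nat),
    D \subset [set~ s] /\ #|D| = #|S| - 2 /\ 0 < i /\ 0 < j /\ i + j = #|S| - 1 /\
    (forall X : {set S}, X \subset D -> #|X| = i -> s |: X \in F1) /\
    (forall X : {set S}, X \subset D -> #|X| = j -> X \in F2).

(* Main.v *)
Require Import Defs.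
From mathcomp Require Import all_boot zify.
Set Implicit Arguments. Unset Strict Implicit. Unset Printing Implicit Defensive.

Lemma cardsU_disj (S : finType) (c Y : {set S}) : c :&: Y = set0 -> #|c :|: Y| = #|c| + #|Y|.
Proof. move=> h; have := cardsUI c Y; rewrite h cards0; lia. Qed.

Lemma up (S : finType) (F : {set {set S}}) (c U : {set S}) m :
  axS2 F -> c :&: U = set0 -> 0 < m ->
  (forall X : {set S}, X \subset U -> #|X| = m -> c :|: X \in F) ->
  forall X : {set S}, X \subset U -> m <= #|X| -> c :|: X \in F.
Proof.
move=> S2 cU m0 H.
have dj : forall Y : {set S}, Y \subset U -> c :&: Y = set0.
  move=> Y YU; apply/eqP; rewrite -subset0 -cU; exact: setIS.
suff: forall L (X : {set S}), X \subset U -> #|X| = m + L -> c :|: X \in F.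
  move=> h X XU hX; apply: (h (#|X| - m)) => //; lia.
elim=> [|L IH] X XU hX; first by apply: H => //; lia.
have: 0 < #|X| by lia.
rewrite card_gt0 => /set0Pn [x xX].
have: 0 < #|X :\ x| by have := cardsD1 x X; rewrite xX; lia.
rewrite card_gt0 => /set0Pn [y]; rewrite !inE => /andP [yx yX].
have X1U : X :\ x \subset U by apply: subset_trans XU; apply: subsetDl.
have X2U : X :\ y \subset U by apply: subset_trans XU; apply: subsetDl.
have c1 : #|X :\ x| = m + L by have := cardsD1 x X; rewrite xX; lia.
have c2 : #|X :\ y| = m + L by have := cardsD1 y X; rewrite yX; lia.
have A1 := IH _ X1U c1; have A2 := IH _ X2U c2.
have E : (c :|: X :\ x) :|: (c :|: X :\ y) = c :|: X.
  apply/setP=> z; rewrite !inE; case: (eqVneq z x) => [->|zx] /=.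
    by case: (x \in c) => //=; rewrite eq_sym yx xX.
  by case: (z \in c); case: (z \in X); case: (z != y).
have := S2 _ _ A1 A2; rewrite E; apply.
  by rewrite !cardsU_disj ?dj // c1 c2.
have := cardsUI (c :|: X :\ x) (c :|: X :\ y); rewrite E.
rewrite !cardsU_disj ?dj //; lia.
Qed.

Lemma up0 (S : finType) (F : {set {set S}}) (U : {set S}) m :
  axS2 F -> 0 < m ->
  (forall X : {set S}, X \subset U -> #|X| = m -> X \in F) ->
  forall X : {set S}, X \subset U -> m <= #|X| -> X \in F.
Proof.
move=> S2 m0 H X XU hX; rewrite -(set0U X).
apply: (up (U := U) (m := m)) => //; first by rewrite set0I.
by move=> Y YU hY; rewrite set0U; apply: H.
Qed.

Lemma down (S : finType) (F : {set {set S}}) (U : {set S}) m :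
  axS1 F -> U \in F ->
  (forall Y : {set S}, Y \subset U -> m <= #|Y| -> #|Y| < #|U| ->
     exists z w, [/\ z \in U, z \notin Y, w \in z |: Y & (z |: Y) :\ w \in F]) ->
  forall Y : {set S}, Y \subset U -> m <= #|Y| -> Y \in F.
Proof.
move=> S1 UF H.
suff: forall L (Y : {set S}), Y \subset U -> m <= #|Y| -> #|Y| + L = #|U| -> Y \in F.
  move=> h Y YU hY; apply: (h (#|U| - #|Y|)) => //.
  have := subset_leq_card YU; lia.
elim=> [|L IH] Y YU hm hY.
  by have -> : Y = U by apply/eqP; rewrite eqEcard YU; lia.
have [z [w [zU zY wA BF]]] := H Y YU hm ltac:(lia).
have cA : #|z |: Y| = #|Y|.+1 by rewrite cardsU1 zY.
have AF : z |: Y \in F.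
  apply: IH; first by rewrite subUset sub1set zU YU.
    lia.
  lia.
have cB : #|z |: Y| = #|(z |: Y) :\ w|.+1 by have := cardsD1 w (z |: Y); rewrite wA.
apply: (S1 _ _ AF BF (properD1 wA) cB); first exact: subsetUr.
lia.
Qed.

Theorem mainTheorem9 (S : finType) (F1 F2 : {set {set S}}) :
  3 <= #|S| -> S_pair F1 F2 ->
  forall s t : S, special_elt F1 F2 s -> special_elt F1 F2 t -> s = t.
Proof.
move=> Hn [F1S1 [F2S1 [F1S2 [F2S2 [[_ F1T] [[_ F2T] S4]]]]]] s t.
move=> [Ds [i [j [HDs [cDs [i0 [j0 [ij [H1s H2s]]]]]]]]].
move=> [Dt [i' [j' [HDt [cDt [i0' [j0' [ij' [H1t H2t]]]]]]]]].
case: (eqVneq s t) => // st; exfalso.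
have sDs : s \notin Ds by apply/negP=> /(subsetP HDs); rewrite !inE eqxx.
have tDt : t \notin Dt by apply/negP=> /(subsetP HDt); rewrite !inE eqxx.
have cUs : #|s |: Ds| = #|S| - 1 by rewrite cardsU1 sDs cDs; clear -Hn; lia.
have cUt : #|t |: Dt| = #|S| - 1 by rewrite cardsU1 tDt cDt; clear -Hn; lia.
have dis : forall (u : S) (D : {set S}), u \notin D -> [set u] :&: D = set0.
  move=> u D uD; apply/setP=> y; rewrite !inE; case: eqP => // ->.
  by rewrite (negbTE uD).
have up1s := up F1S2 (dis _ _ sDs) i0 H1s.
have up1t := up F1S2 (dis _ _ tDt) i0' H1t.
have up2s := up0 F2S2 j0 H2s.
have up2t := up0 F2S2 j0' H2t.
have Us : s |: Ds \in F1 by apply: up1s => //; clear -cDs ij j0; lia.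
have Ut : t |: Dt \in F1 by apply: up1t => //; clear -cDt ij' j0'; lia.
have eqU : s |: Ds = t |: Dt.
  apply/eqP; apply/negPn/negP => ne.
  have cI : #|(s |: Ds) :&: (t |: Dt)| < #|S| - 1.
    have le := subset_leq_card (subsetIl (s |: Ds) (t |: Dt)).
    rewrite cUs in le.
    case: (ltngtP #|(s |: Ds) :&: (t |: Dt)| (#|S| - 1)) => // h; first by clear -le h; lia.
    have e1 : (s |: Ds) :&: (t |: Dt) = s |: Ds.
      apply/eqP; rewrite eqEcard subsetIl cUs ; clear -h; lia.
    have e2 : s |: Ds = t |: Dt.
      apply/eqP; rewrite eqEcard cUs cUt leqnn andbT -e1; exact: subsetIr.
    by rewrite e2 eqxx in ne.
  have cUU := cardsUI (s |: Ds) (t |: Dt).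
  have mx : #|(s |: Ds) :|: (t |: Dt)| <= #|S| by apply: max_card.
  have e3 : #|s |: Ds| = #|t |: Dt| by rewrite cUs cUt.
  have e4 : #|(s |: Ds) :&: (t |: Dt)| = #|s |: Ds| - 1 by clear -cI cUU cUs e3 mx; lia.
  have := F1S2 _ _ Us Ut e3 e4.
  have -> : (s |: Ds) :|: (t |: Dt) = setT.
    have hh : #|S| <= #|(s |: Ds) :|: (t |: Dt)| by clear -cUU e4 cUs cUt Hn; lia.
    by apply/eqP; rewrite eqEcard subsetT cardsT; exact: hh.
  by rewrite (negbTE F1T).
set U := t |: Dt.
have DsE : Ds = U :\ s by rewrite /U -eqU setU1K.
have DtE : Dt = U :\ t by rewrite /U setU1K.
have sU : s \in U by rewrite /U -eqU setU11.
have tU : t \in U by rewrite /U setU11.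
have cU : #|U| = #|S| - 1 by [].
have UF1 : U \in F1 by [].
clearbody U.
have Ds2 : Ds \in F2 by apply: up2s => //; clear -cDs ij i0; lia.
have Dt2 : Dt \in F2 by apply: up2t => //; clear -cDt ij' i0'; lia.
have U2 : U \in F2.
  have E : Ds :|: Dt = U.
    apply/setP=> y; rewrite DsE DtE !inE.
    case: (eqVneq y s) => [->|ys] /=; first by rewrite st sU.
    by case: (y \in U); rewrite ?andbT ?orbT ?andbF.
  have := cardsUI Ds Dt; rewrite E cU cDs cDt => hc.
  rewrite -E; apply: F2S2 => //; [rewrite cDs cDt // | rewrite cDs; clear -hc Hn; lia].
have [x Ux] : exists x, U = [set~ x].
  have h : #|U| + #|~: U| = #|S| := cardsC U.
  rewrite cU in h.
  have : #|~: U| == 1 by apply/eqP; clear -h Hn; lia.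
  case/cards1P=> x hx; exists x; by rewrite -hx setCK.
apply: (S4 i'.+1 x); first (apply/andP; split; clear -ij' j0'; lia).
- rewrite -Ux => X XU hX.
  apply: (down (m := i'.+1) F1S1 UF1 _ XU); last by rewrite hX.
  move=> Y YU hm hl.
  case: (boolP (t \in Y)) => tY.
  + have : ~~ (U \subset Y).
      by apply/negP=> /subset_leq_card h'; clear -h' hl; lia.
    case/subsetPn=> z zU zY; exists z, z; split => //; first exact: setU11.
    rewrite setU1K // -(setD1K tY); apply: up1t.
      by rewrite DtE; apply: setSD.
    by have h' := cardsD1 t Y; rewrite tY in h'; clear -h' hm; lia.
  + have : 0 < #|Y| by clear -hm; lia.
    rewrite card_gt0 => /set0Pn [w wY].
    have wt : w != t by apply/negP=> /eqP wt; rewrite -wt wY in tY.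
    exists t, w; split => //; first by rewrite !inE wY orbT.
    have -> : (t |: Y) :\ w = t |: (Y :\ w).
      apply/setP=> y; rewrite !inE; case: (eqVneq y t) => [->|//].
      by rewrite eq_sym wt.
    apply: up1t.
      rewrite DtE; apply/subsetP=> y; rewrite !inE => /andP [_ yY].
      rewrite (subsetP YU _ yY) andbT; apply/negP=> /eqP yt.
      by rewrite -yt yY in tY.
    by have h' := cardsD1 w Y; rewrite wY in h'; clear -h' hm; lia.
- rewrite -Ux; have -> : #|S| - i'.+1 = j' by clear -ij'; lia.
  move=> X XU hX.
  apply: (down (m := j') F2S1 U2 _ XU); last by rewrite hX.
  move=> Y YU hm hl.
  have : ~~ (U \subset Y).
    by apply/negP=> /subset_leq_card h'; clear -h' hl; lia.
  case/subsetPn=> z zU zY.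
  have zYU : z |: Y \subset U by rewrite subUset sub1set zU YU.
  case: (boolP (t \in Y)) => tY.
  + exists z, t; split => //; first by rewrite !inE tY orbT.
    apply: up2t; first by rewrite DtE; apply: setSD.
    have h' := cardsD1 t (z |: Y); rewrite !inE tY orbT cardsU1 zY in h'; clear -h' hm; lia.
  + exists z, z; split => //; first exact: setU11.
    rewrite setU1K //; apply: up2t => //.
    rewrite DtE; apply/subsetP=> y yY; rewrite !inE (subsetP YU _ yY) andbT.
    by apply/negP=> /eqP yt; rewrite -yt yY in tY.
Qed.
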